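(* Assume: - the strengthened triangle inequality under the square holds with constant $a_0$; - the forms $\overline a_{l,i}$ provide a positive semi-definite splitting with constant $b_0$; - the subspaces are locally stable with constant $C_1$; - the subspaces admit a level-wise coloring with $k_0$ colors. Then the operator $\mathcal P$ of parallel multilevel subspace correction satisfies $$\kappa_2(\mathcal P)\le C^L\Bigl(1+\frac{b_0C_1}{C-1}\Bigr)(1+k_0L),\qquad C=2(1+a_0b_0C_1).$$
   Context: Let $V_h$ be a finite-dimensional real vector space with a symmetric positive definite bilinear form $a_h$, and $\|v\|_{a_h}=\sqrt{a_h(v,v)}$. Let $L\ge1$ and let $V_{h,0}\subseteq V_{h,1}\subseteq\cdots\subseteq V_{h,L}=V_h$ be nested subspaces. For each level $1\le l\le L$ let $P_l\in\mathbb N$ and let $V_{h,l,i}\subseteq V_{h,l}$, $i=1,\dots,P_l$, be subspaces. For each such $(l,i)$ let $\overline V_{h,l,i}$ be a finite-dimensional real vector space, $r_{l,i}:V_{h,l}\to\overline V_{h,l,i}$ a linear map, and $\overline a_{l,i}$ a symmetric positive semi-definite bilinear form on $\overline V_{h,l,i}$ with seminorm $|w|_{\overline a_{l,i}}=\sqrt{\overline a_{l,i}(w,w)}$. Let $\mathcal P_0:V_h\to V_{h,0}$ and $\mathcal P_{l,i}:V_h\to V_{h,l,i}$ be the $a_h$-orthogonal projections. Set $\mathcal P=\mathcal P_0+\sum_{l=1}^L\sum_{i=1}^{P_l}\mathcal P_{l,i}$ and $\kappa_2(\mathcal P)=\lambda_{\max}(\mathcal P)/\lambda_{\min}(\mathcal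 P)$. Strengthened triangle inequality under the square with constant $a_0>0$: for every $l$ and every choice of $v_{l,i}\in V_{h,l,i}$, $$\Bigl\|\sum_{i}v_{l,i}\Bigr\|_{a_h}^2\le a_0\sum_i\|v_{l,i}\|_{a_h}^2.$$ Positive semi-definite splitting with constant $b_0>0$: for every $l$ and all $v_l\in V_{h,l}$, $$\sum_{i}|r_{l,i}v_l|_{\overline a_{l,i}}^2\le b_0\|v_l\|_{a_h}^2.$$ Local stability with constant $C_1>0$: for every $1\le l\le L$ and every $v_l\in V_{h,l}$ there is a decomposition $v_l=v_{l-1}+\sum_{i}v_{l,i}$ with $v_{l-1}\in V_{h,l-1}$ and $v_{l,i}\in V_{h,l,i}$ such that $\|v_{l,i}\|_{a_h}^2\le C_1|r_{l,i}v_l|_{\overline a_{l,i}}^2$ for all $i$. Level-wise coloring with $k_0$ colors: for each $l$ there is a map $c_l:\{1,\dots,P_l\}\to\{1,\dots,k_0\}$ such that $i\ne j$ and $c_l(i)=c_l(j)$ imply $a_h(v_i,v_j)=0$ for all $v_i\in V_{h,l,i}$ and $v_j\in V_{h,l,j}$. All constants are independent of $l$. *)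

(* Defs.v *)
From HB Require Import structures.
From mathcomp Require Import all_boot all_order all_algebra.
From mathcomp Require Import classical_sets reals.
Set Implicit Arguments.
Unset Strict Implicit.
Unset Printing Implicit Defensive.
Import Order.TTheory GRing.Theory Num.Theory.
Local Open Scope ring_scope.
Local Open Scope classical_set_scope.

Definition sym_bilinear (R : realType) (V : lmodType R) (b : V -> V -> R) :=
  (forall u v, b u v = b v u) /\
  (forall (c : R) (u v w : V), b (c *: u + v) w = c * b u w + b v w).

Definition spd_form (R : realType) (V : lmodType R) (b : V -> V -> R) :=
  sym_bilinear b /\ (forall v, v != 0 -> 0 < b v v).

Definition spsd_form (R : realType) (V : lmodType R) (b : V -> V -> R) :=
  sym_bilinear b /\ (forall v, 0 <= b v v).

Definition is_orth_proj (R : realType) (vT : vectType R) (b : vT -> vT -> R)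
    (U : {vspace vT}) (f : vT -> vT) :=
  forall v, f v \in U /\ (forall w, w \in U -> b (v - f v) w = 0).

(* r is linear on the subspace U (r : U -> W) *)
Definition linear_on (R : realType) (vT : vectType R) (W : lmodType R)
    (U : {vspace vT}) (r : vT -> W) :=
  forall (c : R) u v, u \in U -> v \in U -> r (c *: u + v) = c *: r u + r v.

Definition eigenvalues (R : realType) (V : lmodType R) (P : V -> V) : set R :=
  [set lam | exists2 v : V, v != 0 & P v = lam *: v].

Definition lambda_max (R : realType) (V : lmodType R) (P : V -> V) : R :=
  sup (eigenvalues P).
Definition lambda_min (R : realType) (V : lmodType R) (P : V -> V) : R :=
  inf (eigenvalues P).
Definition kappa2 (R : realType) (V : lmodType R) (P : V -> V) : R :=
  lambda_max P / lambda_min P.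

(* Main.v *)
Require Import Defs.
From HB Require Import structures.
From mathcomp Require Import all_boot all_order all_algebra.
From mathcomp Require Import classical_sets reals.
From mathcomp Require Import ring lra zify boolp.
Import Order.TTheory GRing.Theory Num.Theory.
Local Open Scope ring_scope.

Section Bil.
Context {R : realType} {vT : vectType R} {a : vT -> vT -> R} (ha : spd_form a).

Lemma a_sym u v : a u v = a v u. Proof. by case: ha => [[]]. Qed.
Lemma a_lin c u v w : a (c *: u + v) w = c * a u w + a v w.
Proof. by case: ha => [[_]]. Qed.
Lemma aDl u v w : a (u + v) w = a u w + a v w.
Proof. by rewrite -[u]scale1r a_lin mul1r scale1r. Qed.
Lemma a0l w : a 0 w = 0.
Proof. have := a_lin 1 0 0 w; rewrite scale1r addr0 mul1r => h.
lra. Qed.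
Lemma aZl c u w : a (c *: u) w = c * a u w.
Proof. by have := a_lin c u 0 w; rewrite addr0 a0l addr0. Qed.
Lemma aNl u w : a (- u) w = - a u w.
Proof. by rewrite -scaleN1r aZl mulN1r. Qed.
Lemma aBl u v w : a (u - v) w = a u w - a v w.
Proof. by rewrite aDl aNl. Qed.
Lemma aDr u v w : a w (u + v) = a w u + a w v.
Proof. by rewrite !(a_sym w) aDl. Qed.
Lemma aBr u v w : a w (u - v) = a w u - a w v.
Proof. by rewrite !(a_sym w) aBl. Qed.
Lemma aZr c u w : a w (c *: u) = c * a w u.
Proof. by rewrite !(a_sym w) aZl. Qed.
Lemma a_suml I (r : seq I) (Pr : pred I) (F : I -> vT) w :
  a (\sum_(i <- r | Pr i) F i) w = \sum_(i <- r | Pr i) a (F i) w.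
Proof. by apply: (big_morph (fun x => a x w)) => [x y|]; rewrite ?aDl ?a0l. Qed.
Lemma a_sumr I (r : seq I) (Pr : pred I) (F : I -> vT) w :
  a w (\sum_(i <- r | Pr i) F i) = \sum_(i <- r | Pr i) a w (F i).
Proof. rewrite a_sym a_suml; apply: eq_bigr => i _; exact: a_sym. Qed.
Lemma a_ge0 v : 0 <= a v v.
Proof. case: ha => _ h; have [->|/h/ltW //] := eqVneq v 0; by rewrite a0l. Qed.
Lemma a_young K p w : 0 < K -> 2 * a p w <= K * a p p + a w w / K.
Proof.
move=> K0; have := a_ge0 (K *: p - w).
rewrite aBl !aBr !aZl !aZr (a_sym w p) => h.
have -> : K * a p p + a w w / K = (K * (K * a p p) - K * a p w - (K * a p w - a w w)) / K + 2 * a p w.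
  by field; rewrite gt_eqF.
by rewrite lerDr divr_ge0 // ltW.
Qed.
Lemma a_sq2 x y : a (x - y) (x - y) <= 2 * a x x + 2 * a y y.
Proof.
have := a_ge0 (x + y); rewrite aBl !aBr !aDl !aDr (a_sym y x) => h.
lra.
Qed.
Lemma pp_eq (U : {vspace vT}) f v : is_orth_proj a U f -> a (f v) v = a (f v) (f v).
Proof. move=> h; have [hin ho] := h v; have := ho _ hin; rewrite aBl a_sym; lra. Qed.
Lemma pw_eq (U : {vspace vT}) f v w : is_orth_proj a U f -> w \in U -> a v w = a (f v) w.
Proof. move=> h hw; have [hin ho] := h v; have := ho _ hw; rewrite aBl; lra. Qed.

Lemma level_bound n (Vs : nat -> {vspace vT}) (PPs : nat -> vT -> vT) k0 (c : nat -> nat) :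
  (forall i, (i < n)%N -> is_orth_proj a (Vs i) (PPs i)) ->
  (forall i, (i < n)%N -> (1 <= c i <= k0)%N) ->
  (forall i j, (i < n)%N -> (j < n)%N -> i != j -> c i = c j ->
          forall u v, u \in Vs i -> v \in Vs j -> a u v = 0) ->
  forall v, \sum_(i < n) a (PPs i v) v <= k0%:R * a v v.
Proof.
move=> hpr hc horth v.
have key : forall k : 'I_k0, \sum_(i < n | c i == k.+1) a (PPs i v) v <= a v v.
  move=> k; set g := \sum_(i < n | _) _.
  set u := \sum_(i < n | c i == k.+1) PPs i v.
  have e1 : a u v = g by rewrite /u a_suml.
  have e2 : a u u = g.
    rewrite /u a_suml; apply: eq_bigr => i hi; rewrite a_sumr (bigD1 i) //=.
    rewrite big1 ?addr0 => [|j /andP[hj hji]].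
      by rewrite (pp_eq _ _ v (hpr i (ltn_ord i))).
    apply: (horth i j (ltn_ord i) (ltn_ord j)).
    - by apply: contraNneq hji => /val_inj ->.
    - by rewrite (eqP hi) (eqP hj).
    - by case: (hpr i (ltn_ord i) v).
    - by case: (hpr j (ltn_ord j) v).
  have := a_young 1 u v ltr01; rewrite e1 e2 divr1 mul1r; lra.
have -> : \sum_(i < n) a (PPs i v) v =
          \sum_(k < k0) \sum_(i < n | c i == k.+1) a (PPs i v) v.
  have -> : \sum_(k < k0) \sum_(i < n | c i == k.+1) a (PPs i v) v =
     \sum_(k < k0) \sum_(i < n) if c i == (val k).+1 then a (PPs i v) v else 0.
    by apply: eq_bigr => k _; rewrite big_mkcond.
  rewrite exchange_big; apply: eq_bigr => i _; rewrite -big_mkcond /=.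
  have /andP[c1 c2] := hc i (ltn_ord i).
  have hj : ((c i).-1 < k0)%N by rewrite prednK.
  rewrite (big_pred1 (Ordinal hj)) // => k /=.
  apply/eqP/eqP => [h|/(congr1 val)/= h]; first by apply: val_inj => /=; rewrite h.
  by rewrite h prednK.
apply: le_trans (ler_sum _ (fun k _ => key k)) _.
by rewrite sumr_const card_ord mulr_natl.
Qed.
End Bil.

Theorem theorem3p11 (R : realType) (vT : vectType R) (a : vT -> vT -> R)
  (L : nat) (Vl : nat -> {vspace vT}) (P : nat -> nat)
  (Vsub : nat -> nat -> {vspace vT})
  (W : nat -> nat -> vectType R)
  (r : forall l i, vT -> W l i)
  (abar : forall l i, W l i -> W l i -> R)
  (PP0 : vT -> vT) (PP : nat -> nat -> vT -> vT)
  (a0 b0 C1 : R) (k0 : nat) :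
  spd_form a ->
  (1 <= L)%N ->
  (forall l, (l < L)%N -> (Vl l <= Vl l.+1)%VS) ->
  Vl L = fullv ->
  (forall l, (1 <= l <= L)%N -> (0 < P l)%N) ->
  (forall l i, (1 <= l <= L)%N -> (i < P l)%N -> (Vsub l i <= Vl l)%VS) ->
  (forall l i, (1 <= l <= L)%N -> (i < P l)%N -> linear_on (Vl l) (r l i)) ->
  (forall l i, (1 <= l <= L)%N -> (i < P l)%N -> spsd_form (abar l i)) ->
  is_orth_proj a (Vl 0) PP0 ->
  (forall l i, (1 <= l <= L)%N -> (i < P l)%N -> is_orth_proj a (Vsub l i) (PP l i)) ->
  0 < a0 -> 0 < b0 -> 0 < C1 ->
  (* strengthened triangle inequality under the square *)
  (forall l (v : nat -> vT), (1 <= l <= L)%N ->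
     (forall i, (i < P l)%N -> v i \in Vsub l i) ->
     a (\sum_(i < P l) v i) (\sum_(i < P l) v i)
       <= a0 * \sum_(i < P l) a (v i) (v i)) ->
  (* positive semi-definite splitting *)
  (forall l v, (1 <= l <= L)%N -> v \in Vl l ->
     \sum_(i < P l) abar l i (r l i v) (r l i v) <= b0 * a v v) ->
  (* local stability *)
  (forall l v, (1 <= l <= L)%N -> v \in Vl l ->
     exists (v0 : vT) (w : nat -> vT),
       [/\ v0 \in Vl l.-1,
           (forall i, (i < P l)%N -> w i \in Vsub l i /\
              a (w i) (w i) <= C1 * abar l i (r l i v) (r l i v)) &
           v = v0 + \sum_(i < P l) w i]) ->
  (* level-wise coloring with k0 colors *)
  (forall l, (1 <= l <= L)%N ->
     exists c : nat -> nat,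
       (forall i, (i < P l)%N -> (1 <= c i <= k0)%N) /\
       (forall i j, (i < P l)%N -> (j < P l)%N -> i != j -> c i = c j ->
          forall u v, u \in Vsub l i -> v \in Vsub l j -> a u v = 0)) ->
  let Pop := fun v : vT =>
    PP0 v + \sum_(1 <= l < L.+1) \sum_(i < P l) PP l i v in
  let C := 2 * (1 + a0 * b0 * C1) in
  kappa2 Pop <= C ^+ L * (1 + b0 * C1 / (C - 1)) * (1 + k0%:R * L%:R).
Proof.
move=> ha hL hnest hfull hP hsub hlin hspsd h0 hproj ha0 hb0 hC1 hsti hsplit hstab hcol.
pose Pop := fun v : vT => PP0 v + \sum_(1 <= l < L.+1) \sum_(i < P l) PP l i v.
pose C := 2 * (1 + a0 * b0 * C1).
change (kappa2 Pop <= C ^+ L * (1 + b0 * C1 / (C - 1)) * (1 + k0%:R * L%:R)).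
have abC : 0 < a0 * b0 * C1 by rewrite !mulr_gt0.
have C2 : 2 < C by rewrite /C; lra.
set e := b0 * C1 / (C - 1).
set D := 1 + e.
have e0 : 0 <= e by rewrite /e divr_ge0 // ?ltW ?mulr_gt0 //; lra.
pose K (l : nat) := C ^+ l * D - e.
have K1 : forall l, 1 <= K l.
  move=> l; rewrite /K /D; have Cg1 : 1 <= C by lra.
  have := @exprn_ege1 _ l C Cg1; nra.
have KS : forall l, K l.+1 = C * K l + b0 * C1.
  move=> l; rewrite /K /e exprS; field; rewrite subr_eq0 gt_eqF //; lra.
have dec : forall l, (l <= L)%N -> forall v, v \in Vl l -> exists (v0 : vT) (w : nat -> nat -> vT),
  [/\ v0 \in Vl 0, (forall l' i, (1 <= l' <= l)%N -> (i < P l')%N -> w l' i \in Vsub l' i),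
      v = v0 + \sum_(1 <= l' < l.+1) \sum_(i < P l') w l' i &
      a v0 v0 + \sum_(1 <= l' < l.+1) \sum_(i < P l') a (w l' i) (w l' i) <= K l * a v v].
  elim=> [_ v hv|l IH hl v hv].
    exists v, (fun _ _ => 0); split => //.
    - by move=> l' i; lia.
    - by rewrite big_geq // addr0.
    - by rewrite big_geq // addr0 /K expr0 mul1r /D addrK mul1r.
  have hl1 : (1 <= l.+1 <= L)%N by rewrite hl.
  have [v' [wl [hv' hwl ev]]] := hstab l.+1 v hl1 hv.
  have [v0 [w [hv0 hw ev' hen]]] := IH (ltnW hl) v' hv'.
  exists v0, (fun l' i => if l' == l.+1 then wl i else w l' i); split => //.
  - move=> l' i hl' hi; case: eqP => [E|/eqP E]; first by subst l'; case: (hwl i hi).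
    by apply: hw => //; lia.
  - rewrite big_nat_recr //= eqxx addrA.
    rewrite (eq_big_nat _ _ (F2 := fun l' => \sum_(i < P l') w l' i)); first by rewrite -ev' ev.
    by move=> l' /andP[_ hl']; rewrite (ltn_eqF hl').
  rewrite big_nat_recr //= eqxx addrA.
  rewrite (eq_big_nat _ _ (F2 := fun l' => \sum_(i < P l') a (w l' i) (w l' i)));
    last by move=> l' /andP[_ hl']; rewrite (ltn_eqF hl').
  set T := \sum_(i < P l.+1) a (wl i) (wl i).
  have hT : T <= C1 * (b0 * a v v).
    apply: le_trans (ler_wpM2l (ltW hC1) (hsplit _ _ hl1 hv)).
    rewrite mulr_sumr; apply: ler_sum => i _; exact: (hwl i (ltn_ord i)).2.
  have hsw : a (\sum_(i < P l.+1) wl i) (\sum_(i < P l.+1) wl i) <= a0 * T.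
    by apply: hsti => // i hi; case: (hwl i hi).
  have hv'b : a v' v' <= C * a v v.
    have -> : v' = v - \sum_(i < P l.+1) wl i by rewrite ev addrK.
    apply: le_trans (a_sq2 ha _ _) _.
    have := ler_wpM2l (ltW ha0) hT; rewrite /C; nra.
  have Kl0 : 0 <= K l by have := K1 l; lra.
  have := ler_wpM2l Kl0 hv'b; rewrite KS; nra.
have eP : forall v, a (Pop v) v = a (PP0 v) v + \sum_(1 <= l < L.+1) \sum_(i < P l) a (PP l i v) v.
  move=> v; rewrite /Pop (aDl ha) (a_suml ha); congr (_ + _).
  by apply: eq_bigr => l _; rewrite (a_suml ha).
set KL := K L.
have KL0 : 0 < KL by have := K1 L; rewrite /KL; lra.
have lower : forall v, a v v <= KL * a (Pop v) v.
  move=> v; have hvL : v \in Vl L by rewrite hfull memvf.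
  have [v0 [w [hv0 hw ev hen]]] := dec L (leqnn L) v hvL.
  set A := \sum_(1 <= l < L.+1) \sum_(i < P l) a v (w l i).
  set B := \sum_(1 <= l < L.+1) \sum_(i < P l) a (PP l i v) v.
  set E := \sum_(1 <= l < L.+1) \sum_(i < P l) a (w l i) (w l i).
  have eS : a v v = a v v0 + A.
    rewrite {2}ev (aDr ha) (a_sumr ha); congr (_ + _).
    by apply: eq_bigr => l _; rewrite (a_sumr ha).
  have hA : 2 * A <= KL * B + E / KL.
    have -> : 2 * A = \sum_(1 <= l < L.+1) \sum_(i < P l) 2 * a v (w l i).
      by rewrite /A mulr_sumr; apply: eq_bigr => l _; rewrite mulr_sumr.
    have -> : KL * B + E / KL = \sum_(1 <= l < L.+1) \sum_(i < P l)
        (KL * a (PP l i v) v + a (w l i) (w l i) / KL).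
      rewrite /B /E mulr_sumr mulr_suml -big_split /=; apply: eq_bigr => l _.
      by rewrite mulr_sumr mulr_suml -big_split.
    rewrite big_nat_cond [leRHS]big_nat_cond; apply: ler_sum => l /andP[hl _].
    apply: ler_sum => i _.
    have hpr := hproj l i hl (ltn_ord i).
    rewrite (pw_eq ha _ _ v _ hpr (hw l i hl (ltn_ord i))) (pp_eq ha _ _ v hpr).
    exact: a_young.
  have h0' : 2 * a v v0 <= KL * a (PP0 v) v + a v0 v0 / KL.
    rewrite (pw_eq ha _ _ v _ h0 hv0) (pp_eq ha _ _ v h0); exact: a_young.
  have hdiv : (a v0 v0 + E) / KL <= a v v by rewrite ler_pdivrMr // mulrC.
  rewrite eP -/B; move: hdiv; rewrite mulrDl => hdiv.
  lra.
set M := 1 + k0%:R * L%:R.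
have upper : forall v, a (Pop v) v <= M * a v v.
  move=> v; rewrite eP.
  have h0b : a (PP0 v) v <= a v v.
    have := a_young ha 1 (PP0 v) v ltr01; rewrite (pp_eq ha _ _ v h0) divr1 mul1r; lra.
  have hlev : \sum_(1 <= l < L.+1) \sum_(i < P l) a (PP l i v) v <=
              \sum_(1 <= l < L.+1) k0%:R * a v v.
    rewrite big_nat_cond [leRHS]big_nat_cond; apply: ler_sum => l /andP[hl _].
    have [c [hc hco]] := hcol l hl.
    exact: (level_bound ha _ _ _ _ _ (fun i hi => hproj l i hl hi) hc hco v).
  rewrite sumr_const_nat subn1 /= -mulr_natr in hlev.
  rewrite /M; lra.
have M0 : 0 < M.
  have : 0 <= k0%:R * L%:R :> R by rewrite mulr_ge0.
  rewrite /M; lra.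
have Ebd : forall lam, eigenvalues Pop lam -> 1 <= KL * lam /\ lam <= M.
  move=> lam [v vn ev]; have S0 : 0 < a v v := ha.2 v vn.
  have eq : a (Pop v) v = lam * a v v by rewrite ev (aZl ha).
  have := lower v; have := upper v; rewrite eq => hu hl; split.
    by rewrite -(ler_pM2r S0) mul1r -mulrA.
  by rewrite -(ler_pM2r S0).
have KLb : KL <= C ^+ L * D by rewrite /KL /K; lra.
rewrite /kappa2 /lambda_max /lambda_min.
have CD0 : 0 < C ^+ L * D by apply: lt_le_trans KLb.
have [[x Ex]|En] := pselect (exists x, eigenvalues Pop x); last first.
  have -> : eigenvalues Pop = set0.
    by apply/seteqP; split => y // Ey; exfalso; apply: En; exists y.
  by rewrite sup0 inf0 mul0r mulr_ge0 // ltW.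
have hs : sup (eigenvalues Pop) <= M.
  by apply: ge_sup; [exists x | move=> y /Ebd []].
have hi : 1 / KL <= inf (eigenvalues Pop).
  apply: lb_le_inf; first by exists x.
  move=> y Ey; have [h _] := Ebd y Ey.
  by rewrite (ler_pdivrMr _ _ KL0) mulrC.
have i0 : 0 < inf (eigenvalues Pop) by apply: lt_le_trans hi; rewrite divr_gt0.
rewrite (ler_pdivrMr _ _ i0).
have : 1 <= KL * inf (eigenvalues Pop) by move: hi; rewrite (ler_pdivrMr _ _ KL0) mulrC.
set i := inf _; set s := sup _ => h1.
have H1 : M <= M * (KL * i) by rewrite ler_peMr // ltW.
have H2 : M * KL * i <= C ^+ L * D * M * i.
  rewrite ler_pM2r // [M * KL]mulrC.
  by rewrite ler_pM2r.
apply: le_trans hs _; apply: le_trans H1 _; rewrite mulrA; exact: H2.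
Qed.
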